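(* Let $m$ be a positive integer, $c$ a nonnegative integer, and $f(x)=x(e^{mx}+c)$ for $x>0$. For each positive integer $n$ and each $i\in\{0,1,2\}$, let $t_i=t_i(n)$ be the unique positive number with $f(t_i)=n+i$. Then, as $n\to\infty$, \begin{align*} t_1-t_0&=\frac{1}{mn}-\frac{1}{m^2nt_0}+O\Bigl(\frac{1}{n\log^2 n}\Bigr),\\ t_2-t_1&=\frac{1}{mn}-\frac{1}{m^2nt_0}+O\Bigl(\frac{1}{n\log^2 n}\Bigr),\\ 2t_1-t_0-t_2&=\frac{1}{mn^2}+O\Bigl(\frac{1}{n^2\log n}\Bigr),\\ \frac1{t_0}+\frac1{t_2}-\frac{2}{t_1}&=O\Bigl(\frac{1}{n^2\log^2 n}\Bigr). \end{align*} *)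

(* Defs.v *)
From Stdlib Require Import Reals.
Open Scope R_scope.

Definition fmc (m c : nat) (x : R) : R := x * (exp (INR m * x) + INR c).

Definition bigO (u v : nat -> R) : Prop :=
  exists C : R, exists N : nat, forall n : nat, (N <= n)%nat ->
    Rabs (u n) <= C * Rabs (v n).

(* Main.v *)
Require Import Defs.
From Stdlib Require Import Reals.
From Stdlib Require Import Lra Psatz.
From Coquelicot Require Coquelicot.
Open Scope R_scope.

Module ExpL.
Import Coquelicot.Coquelicot.

Lemma h1_sign (x : R) : (0 <= x -> 1 + x + x^2/2 <= exp x) /\ (x <= 0 -> exp x <= 1 + x + x^2/2).
Proof.
  pose (g := fun z => exp z - 1 - z - z^2/2).
  assert (Hd : forall z : R, is_derive g z (exp z - 1 - z)).
  { intro z. unfold g. auto_derive; auto. field. }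
  destruct (MVT_gen g 0 x (fun z => exp z - 1 - z)) as [c [Hc He]].
  { intros z _; apply Hd. }
  { intros z _. apply continuity_pt_filterlim. apply (ex_derive_continuous g).
    eexists; apply Hd. }
  assert (Hg0 : g 0 = 0) by (unfold g; rewrite exp_0; field).
  assert (Hpos : 0 <= exp c - 1 - c) by (pose proof (exp_ineq1_le c); lra).
  unfold g in He, Hg0. split; intro Hx.
  - nra.
  - nra.
Qed.

Lemma exp_ge3 (x : R) : 1 + x + x^2/2 + x^3/6 <= exp x.
Proof.
  pose (g := fun z => exp z - 1 - z - z^2/2 - z^3/6).
  assert (Hd : forall z : R, is_derive g z (exp z - 1 - z - z^2/2)).
  { intro z. unfold g. auto_derive; auto. simpl. field. }
  destruct (MVT_gen g 0 x (fun z => exp z - 1 - z - z^2/2)) as [c [Hc He]].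
  { intros z _; apply Hd. }
  { intros z _. apply continuity_pt_filterlim. apply (ex_derive_continuous g).
    eexists; apply Hd. }
  assert (Hg0 : g 0 = 0) by (unfold g; rewrite exp_0; field).
  unfold g in He, Hg0.
  destruct (Rle_dec 0 x) as [Hx|Hx].
  - rewrite Rmin_left in Hc by lra. rewrite Rmax_right in Hc by lra.
    destruct (h1_sign c) as [H _]. specialize (H (proj1 Hc)). nra.
  - rewrite Rmin_right in Hc by lra. rewrite Rmax_left in Hc by lra.
    destruct (h1_sign c) as [_ H]. specialize (H (proj2 Hc)). nra.
Qed.

Lemma exp_le3 (x : R) : 0 <= x <= 1 -> exp x <= 1 + x + x^2/2 + x^3.
Proof.
  intro Hx. pose proof (exp_ge3 (-x)) as H.
  assert (Hp : exp x * exp (-x) = 1) by (rewrite <- exp_plus; replace (x + -x) with 0 by ring; apply exp_0).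
  pose proof (exp_pos x).
  assert (Hpol : 1 <= (1 + x + x^2/2 + x^3) * (1 - x + x^2/2 - x^3/6)).
  { assert (E : (1 + x + x^2/2 + x^3) * (1 - x + x^2/2 - x^3/6) - 1 = x^3 * ((1-x)*(8 - 3*x + 2*x^2) + 2)/12) by field.
    assert (0 <= x^3) by (apply pow_le; lra).
    assert (0 <= (1-x)*(8 - 3*x + 2*x^2)) by (apply Rmult_le_pos; nra).
    nra. }
  assert (Hq : 0 < 1 - x + x^2/2 - x^3/6) by nra.
  nra.
Qed.

End ExpL.
Import ExpL.

Lemma ln_le' (x y : R) : 0 < x -> x <= y -> ln x <= ln y.
Proof. intros h [h'|h']. left; apply ln_increasing; auto. subst; lra. Qed.

Lemma f_mono (a C x y : R) : 1 <= a -> 0 <= C -> 0 < x -> 0 < y ->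
  x * (exp (a*x) + C) < y * (exp (a*y) + C) -> x < y.
Proof.
  intros Ha HC Hx Hy H. destruct (Rlt_or_le x y) as [h|h]; auto.
  exfalso. assert (exp (a*y) <= exp (a*x)).
  { destruct (Req_dec x y). subst; lra. left. apply exp_increasing. nra. }
  pose proof (exp_pos (a*y)). nra.
Qed.

Lemma step_bounds (a C x y : R) : 1 <= a -> 0 <= C -> 0 < x -> x < y ->
  y * (exp (a*y) + C) - x * (exp (a*x) + C) = 1 ->
  (y - x) * (exp (a*x) * (1 + a*x) + C) <= 1 /\ 1 <= (y - x) * (exp (a*y) * (1 + a*y) + C).
Proof.
  intros Ha HC Hx Hxy H.
  assert (E1 : exp (a*y) = exp (a*x) * exp (a*(y-x))) by (rewrite <- exp_plus; f_equal; ring).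
  assert (E2 : exp (a*x) = exp (a*y) * exp (-(a*(y-x)))) by (rewrite <- exp_plus; f_equal; ring).
  pose proof (exp_ineq1_le (a*(y-x))). pose proof (exp_ineq1_le (-(a*(y-x)))).
  pose proof (exp_pos (a*x)). pose proof (exp_pos (a*y)).
  assert (0 < y - x) by lra. assert (0 < a*(y-x)) by nra.
  split.
  - rewrite E1 in H.
    assert (h1 : exp (a*x) * exp (a*(y-x)) >= exp (a*x) * (1 + a*(y-x))) by nra.
    assert (h2 : 1 >= y * (exp (a*x) * (1 + a*(y-x))) + y*C - x*(exp (a*x) + C)) by nra.
    assert (h3 : 0 <= (y-x) * (exp (a*x) * (a*(y-x)))) by (apply Rmult_le_pos; nra).
    nra.
  - rewrite E2 in H.
    assert (h1 : exp (a*y) * exp (-(a*(y-x))) >= exp (a*y) * (1 + -(a*(y-x)))) by nra.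
    assert (h2 : 1 <= y * (exp (a*y) + C) - x * (exp (a*y) * (1 + -(a*(y-x))) + C)) by nra.
    assert (h3 : 0 <= (y-x) * (exp (a*y) * (a*(y-x)))) by (apply Rmult_le_pos; nra).
    nra.
Qed.

Lemma size_bounds (a C z N : R) : 1 <= a -> 0 <= C -> 0 < z ->
  z * (exp (a*z) + C) = N -> z^4 <= 6*N /\ ln N <= 2*a*z + ln (1+C) /\ z <= N.
Proof.
  intros Ha HC Hz H.
  pose proof (exp_ge3 (a*z)) as G. pose proof (exp_pos (a*z)).
  pose proof (exp_ineq1_le (a*z)).
  assert (az : z <= a*z) by nra.
  split; [|split].
  - assert (z^3 <= (a*z)^3) by (apply pow_incr; lra).
    assert (0 <= (a*z)^2) by (apply pow2_ge_0).
    assert (z^3/6 <= exp (a*z)) by (assert (0 <= a*z) by nra; lra).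
    assert (z * exp (a*z) <= N) by nra.
    nra.
  - assert (HN : N <= exp (2*a*z) * (1+C)).
    { replace (2*a*z) with (a*z + a*z) by ring. rewrite exp_plus.
      assert (z <= exp (a*z)) by lra. assert (1 <= exp (a*z)) by nra.
      assert (z * exp (a*z) <= exp (a*z) * exp (a*z)) by nra.
      assert (z <= exp (a*z) * exp (a*z)) by nra.
      assert (z * C <= exp (a*z) * exp (a*z) * C) by (apply Rmult_le_compat_r; lra). nra. }
    assert (HN0 : 0 < N) by nra.
    pose proof (ln_le' _ _ HN0 HN) as L. rewrite ln_mult in L by (try apply exp_pos; lra).
    rewrite ln_exp in L. lra.
  - nra.
Qed.

Lemma ident (a C t0 t1 t2 : R) : 1 <= a -> 0 <= C -> 0 < t0 -> t0 < t1 -> t1 < t2 ->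
  t1 * (exp (a*t1) + C) - t0 * (exp (a*t0) + C) = 1 ->
  t2 * (exp (a*t2) + C) - t1 * (exp (a*t1) + C) = 1 ->
  a * (t1 - t0) <= 1 -> a * (t2 - t1) <= 1 ->
  exists R1 R2, Rabs R1 <= (a*(t1-t0))^3 + (a*(t2-t1))^3 /\
    Rabs R2 <= 3*a*((t1-t0)^2 + (t2-t1)^2) /\
    ((t2-t1) - (t1-t0)) * (exp (a*t1) * (1 + a*t1) + C) =
      - (exp (a*t1) * t1 * ((a*(t1-t0))^2 + (a*(t2-t1))^2)/2
         + exp (a*t1) * t1 * R1 + exp (a*t1) * R2).
Proof.
  intros Ha HC H0 H01 H12 F1 F2 Hu Hv.
  set (d := t1 - t0) in *. set (e := t2 - t1) in *. set (u := a*d) in *. set (v := a*e) in *.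
  set (E := exp (a*t1)) in *.
  assert (E0 : exp (a*t0) = E * exp (-u)) by (unfold E, u, d; rewrite <- exp_plus; f_equal; ring).
  assert (E2 : exp (a*t2) = E * exp v) by (unfold E, v, e; rewrite <- exp_plus; f_equal; ring).
  assert (hd : 0 < d) by (unfold d; lra). assert (he : 0 < e) by (unfold e; lra).
  assert (hu : 0 < u) by (unfold u; nra). assert (hv : 0 < v) by (unfold v; nra).
  exists ((exp v - 1 - v - v^2/2) + (exp (-u) - 1 + u - u^2/2)).
  exists (e * (exp v - 1) + d * (1 - exp (-u))).
  pose proof (exp_ge3 (-u)). assert (Hv01 : 0 <= v <= 1)  by (split; lra). pose proof (exp_le3 v Hv01).
  pose proof (h1_sign v) as [A1 _]. pose proof (h1_sign (-u)) as [_ A2].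
  specialize (A1 ltac:(lra)). specialize (A2 ltac:(lra)).
  pose proof (exp_ineq1_le (-u)).
  assert (0 <= u^3) by (apply pow_le; lra). assert (0 <= v^3) by (apply pow_le; lra).
  assert (0 <= u^2) by (apply pow_le; lra). assert (v^3 <= v^2) by (simpl; nra).
  split; [|split].
  - apply Rabs_le. split; nra.
  - assert (B1 : 0 <= exp v - 1 <= 3*v).
    { assert (v^2 <= v) by (simpl; nra). assert (0 <= v^2) by (apply pow_le; lra). split; lra. }
    assert (B2 : 0 <= 1 - exp (-u) <= u) by (assert (exp (-u) <= 1) by (rewrite <- exp_0; left; apply exp_increasing; lra); split; lra).
    assert (B3 : 0 <= e * (exp v - 1) <= e * (3*v)) by (split; [apply Rmult_le_pos|apply Rmult_le_compat_l]; lra).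
    assert (B4 : 0 <= d * (1 - exp (-u)) <= d * u) by (split; [apply Rmult_le_pos|apply Rmult_le_compat_l]; lra).
    apply Rabs_le. unfold u, v in *. split; nra.
  - rewrite E0 in F1. rewrite E2 in F2.
    replace t2 with (t1 + e) in F2 by (unfold e; ring).
    replace t0 with (t1 - d) in F1 by (unfold d; ring).
    unfold u, v in *. nra.
Qed.

Lemma Rabs_le_between (x b : R) : Rabs x <= b -> -b <= x <= b.
Proof. unfold Rabs; destruct (Rcase_abs x); lra. Qed.

Definition KP (a C : R) := 2 + C + 2*a + 18*a*C.

Lemma P_bounds (a C n t y E i : R) : 1 <= a -> 0 <= C -> 2 <= n -> 0 <= i <= 2 ->
  0 < y -> 1 <= t * y -> 0 < t -> 0 < E -> t * (E + C) = n + i -> C * t <= n/4 ->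
  t <= 18 * n * y -> 1 <= n * y ->
  3*a*n/4 <= E*(1+a*t) + C /\ Rabs (E*(1+a*t) + C - a*n) <= KP a C * n * y.
Proof.
  intros Ha HC Hn Hi Hy Hty Ht HE Hf HCt Ht18 Hny.
  assert (HEt : E * t = n + i - C*t) by nra.
  assert (HE2 : E <= 2*n*y).
  { assert (E <= E * (t*y)) by nra. nra. }
  unfold KP. split.
  - nra.
  - apply Rabs_le. split.
    + assert (a*C*t <= 18*a*C*n*y).
      { assert (C*t <= C*(18*n*y)) by (apply Rmult_le_compat_l; lra). nra. }
      assert (0 <= C*n*y) by (apply Rmult_le_pos; nra).
      assert (0 <= a*n*y) by (apply Rmult_le_pos; nra).
      nra.
    + assert (0 <= a*C*t) by (apply Rmult_le_pos; nra).
      assert (C <= C*(n*y)) by nra.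
      assert (a <= a*(n*y)) by nra.
      nra.
Qed.

Lemma D_bounds (a n y K d P P' : R) : 1 <= a -> 2 <= n -> 0 < d ->
  d * P <= 1 -> 1 <= d * P' -> 3*a*n/4 <= P -> 3*a*n/4 <= P' ->
  Rabs (P - a*n) <= K*n*y -> Rabs (P' - a*n) <= K*n*y ->
  Rabs (a*n*d - 1) <= 2*K*y /\ a*n*d <= 4/3.
Proof.
  intros Ha Hn Hd H1 H2 HP HP' A1 A2.
  apply Rabs_le_between in A1. apply Rabs_le_between in A2.
  assert (0 < a*n) by nra.
  assert (0 <= K*n*y) by (pose proof (Rabs_pos (P - a*n)); lra).
  assert (0 <= K*y) by (apply (Rmult_le_reg_l n); nra).
  assert (U : (a*n*d - 1) * P <= K*n*y) by nra.
  assert (L : (1 - a*n*d) * P' <= K*n*y) by nra.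
  split.
  - apply Rabs_le. split.
    + destruct (Rle_dec (1 - a*n*d) 0). nra.
      assert ((1 - a*n*d) * (3*a*n/4) <= K*n*y) by nra.
      assert ((1 - a*n*d) * (3*a/4) <= K*y) by (apply (Rmult_le_reg_l n); nra).
      nra.
    + destruct (Rle_dec (a*n*d - 1) 0). nra.
      assert ((a*n*d - 1) * (3*a*n/4) <= K*n*y) by nra.
      assert ((a*n*d - 1) * (3*a/4) <= K*y) by (apply (Rmult_le_reg_l n); nra).
      nra.
  - assert (a*n*d*P <= a*n) by nra. nra.
Qed.

Definition K1 (a C : R) := 2*(18*a*C + 1 + 18*(a+1+C) + KP a C).

Lemma C1_bound (a C n t0 t1 y E0 E1 d : R) : 1 <= a -> 0 <= C -> 2 <= n ->
  y * t0 = 1 -> 1 <= t0 -> t0 <= t1 -> 0 < E0 -> 0 < E1 -> 0 < d ->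
  t0 * (E0 + C) = n -> t1 * (E1 + C) = n + 1 ->
  d * (E0*(1+a*t0)+C) <= 1 -> 1 <= d * (E1*(1+a*t1)+C) ->
  3*a*n/4 <= E0*(1+a*t0)+C -> 3*a*n/4 <= E1*(1+a*t1)+C ->
  Rabs (E1*(1+a*t1)+C - a*n) <= KP a C * n * y ->
  t0^4 <= 18*n ->
  Rabs (a*n*d - 1 + y/a) <= K1 a C * y^2.
Proof.
  intros Ha HC Hn Hyt Ht0 Ht01 HE0 HE1 Hd Hf0 Hf1 S0 S1 P0l P1l P1b Hq.
  set (P0 := E0*(1+a*t0)+C) in *. set (P1 := E1*(1+a*t1)+C) in *.
  set (K := KP a C) in *.
  assert (Hy : 0 < y) by nra.
  assert (HE0y : E0 = n*y - C) by nra.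
  assert (HP0 : P0 = a*n + n*y - a*C*t0) by (unfold P0; rewrite HE0y; assert (a*n*(y*t0) = a*n) by (rewrite Hyt; ring); nra).
  assert (t0y2 : t0^2 * y^2 = 1) by (replace (t0^2*y^2) with ((y*t0)^2) by ring; rewrite Hyt; ring).
  assert (t02 : t0^2 <= 18*n) by (assert (t0^2 <= t0^4) by (apply Rle_pow; lia || lra); lra).
  assert (t03 : t0^3 <= 18*n) by (assert (t0^3 <= t0^4) by (apply Rle_pow; lia || lra); lra).
  assert (ny2 : 1 <= 18*n*y^2) by nra.
  assert (Hna : 0 < a*n) by nra.
  assert (HK : 0 <= K) by (unfold K, KP; nra).
  set (ia := / a).
  assert (Hia : a * ia = 1) by (unfold ia; field; lra).
  assert (Hia0 : 0 < ia) by (unfold ia; apply Rinv_0_lt_compat; lra).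
  assert (Hia1 : ia <= 1) by nra.
  replace (y/a) with (y*ia) by (unfold ia; field; lra).
  set (Z := a*n*d - 1 + y*ia).
  assert (Hn0 : 0 < n*y^2) by nra.
  assert (U1 : Z * P0 <= a*n - P0 + y*ia*P0).
  { unfold Z. assert (a*n*(d*P0) <= a*n) by nra. nra. }
  assert (U2 : a*n - P0 + y*ia*P0 = a*C*t0 + n*y^2*ia - C).
  { rewrite HP0. assert (y*ia*(a*n) = n*y) by (replace (y*ia*(a*n)) with (n*y*(a*ia)) by ring; rewrite Hia; ring).
    assert (y*ia*(a*C*t0) = C) by (replace (y*ia*(a*C*t0)) with (C*(a*ia)*(y*t0)) by ring; rewrite Hia, Hyt; ring).
    nra. }
  assert (U3 : a*C*t0 <= 18*a*C*n*y^2).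
  { replace (a*C*t0) with (a*C*(t0^3*y^2)).
    2:{ replace (t0^3*y^2) with (t0*(y*t0)^2) by ring. rewrite Hyt. ring. }
    assert (0 <= a*C*y^2) by (apply Rmult_le_pos; nra).
    assert (a*C*y^2*t0^3 <= a*C*y^2*(18*n)) by (apply Rmult_le_compat_l; lra).
    nra. }
  assert (U4 : n*y^2*ia <= n*y^2) by nra.
  assert (U : Z * P0 <= (18*a*C+1)*n*y^2) by nra.
  assert (L1 : Z * P1 >= a*n - P1 + y*ia*P1).
  { unfold Z. assert (a*n*(d*P1) >= a*n) by nra. nra. }
  assert (HE1t : a*E1*t1 = a*(n+1) - a*C*t1) by nra.
  assert (L2 : a*n - P1 >= - E1 - a - C).
  { unfold P1. assert (0 <= a*C*t1) by (apply Rmult_le_pos; nra). nra. }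
  assert (L3 : E1 <= (n+1)*y).
  { assert (E1 = (E1*t1)*y - E1*(y*t1 - 1)) by ring.
    assert (0 <= E1*(y*t1-1)) by (apply Rmult_le_pos; nra).
    assert (0 <= C*t1*y) by (apply Rmult_le_pos; nra).
    nra. }
  assert (L4 : y*ia*(a*n) = n*y) by (replace (y*ia*(a*n)) with (n*y*(a*ia)) by ring; rewrite Hia; ring).
  apply Rabs_le_between in P1b.
  assert (L5 : y*ia*(P1 - a*n) >= - K*n*y^2).
  { assert (0 <= y*ia) by nra.
    assert (y*ia*(P1-a*n) >= y*ia*(-(K*n*y))) by nra.
    assert (y*ia*(K*n*y) <= K*n*y^2).
    { assert (0 <= K*n*y*y) by (apply Rmult_le_pos; [apply Rmult_le_pos|]; nra).
      replace (y*ia*(K*n*y)) with (ia*(K*n*y*y)) by ring. simpl. nra. }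
    nra. }
  assert (L6 : 1 + a + C <= (1+a+C)*(18*n*y^2)) by (rewrite <- (Rmult_1_r (1+a+C)) at 1; apply Rmult_le_compat_l; lra).
  assert (L : Z * P1 >= - (18*(1+a+C) + K)*n*y^2).
  { assert (a*n - P1 + y*ia*P1 = (a*n - P1) + y*ia*(a*n) + y*ia*(P1 - a*n)) by ring.
    assert (y <= 1) by nra. nra. }
  set (M1 := 18*(1+a+C) + K) in *. set (M2 := 18*a*C+1) in *.
  assert (HM1 : 0 <= M1*y^2) by (unfold M1; apply Rmult_le_pos; [lra| apply pow2_ge_0]).
  assert (HM2 : 0 <= M2*y^2) by (unfold M2; apply Rmult_le_pos; [nra| apply pow2_ge_0]).
  assert (EK : K1 a C * y^2 = 2*(M2*y^2) + 2*(M1*y^2)) by (unfold K1, M1, M2, K; ring).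
  rewrite EK. apply Rabs_le. split.
  - destruct (Rle_dec 0 Z). lra.
    assert (A1 : (-Z) * (3*a*n/4) <= (-Z) * P1) by (apply Rmult_le_compat_l; lra).
    assert (A2 : (-Z) * (3*a*n/4) <= M1*y^2*n) by lra.
    assert (A3 : (-Z) * (3*a/4) <= M1*y^2) by (apply (Rmult_le_reg_l n); lra).
    assert (A4 : (-Z) * (3/4) <= (-Z) * (3*a/4)) by (apply Rmult_le_compat_l; lra).
    lra.
  - destruct (Rle_dec Z 0). lra.
    assert (A1 : Z * (3*a*n/4) <= Z * P0) by (apply Rmult_le_compat_l; lra).
    assert (A2 : Z * (3*a*n/4) <= M2*y^2*n) by lra.
    assert (A3 : Z * (3*a/4) <= M2*y^2) by (apply (Rmult_le_reg_l n); lra).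
    assert (A4 : Z * (3/4) <= Z * (3*a/4)) by (apply Rmult_le_compat_l; lra).
    lra.
Qed.

Definition K3 (a C : R) := 2*(2*a*(1+18*C) + 6*a*(2*KP a C) + KP a C + 8*a + 18).

Lemma Rabs_triang5 (x1 x2 x3 x4 x5 : R) :
  Rabs (x1+x2+x3+x4+x5) <= Rabs x1 + Rabs x2 + Rabs x3 + Rabs x4 + Rabs x5.
Proof.
  eapply Rle_trans. apply Rabs_triang. apply Rplus_le_compat_r.
  eapply Rle_trans. apply Rabs_triang. apply Rplus_le_compat_r.
  eapply Rle_trans. apply Rabs_triang. apply Rplus_le_compat_r.
  apply Rabs_triang.
Qed.

Lemma sq_close (D K y : R) : Rabs (D - 1) <= 2*K*y -> 0 < D -> D <= 4/3 ->
  Rabs (D^2 - 1) <= 3*(2*K*y).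
Proof.
  intros H1 H2 H3. replace (D^2-1) with ((D-1)*(D+1)) by ring.
  rewrite Rabs_mult. assert (Rabs (D+1) <= 3) by (rewrite Rabs_right; lra).
  assert (0 <= Rabs (D-1)) by apply Rabs_pos.
  rewrite Rmult_comm. apply Rle_trans with (3 * Rabs (D-1)).
  apply Rmult_le_compat_r; lra. lra.
Qed.

Lemma C3_bound (a C n t1 y E1 d e R1 R2 : R) : 1 <= a -> 0 <= C -> 2 <= n ->
  0 < y -> 1 <= n*y -> 0 < t1 -> t1 <= 18*n*y -> 1 <= t1*y -> 0 < E1 ->
  t1 * (E1 + C) = n + 1 -> 0 < d -> 0 < e ->
  Rabs (a*n*d - 1) <= 2*KP a C*y -> a*n*d <= 4/3 ->
  Rabs (a*n*e - 1) <= 2*KP a C*y -> a*n*e <= 4/3 ->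
  3*a*n/4 <= E1*(1+a*t1)+C -> Rabs (E1*(1+a*t1)+C - a*n) <= KP a C * n * y ->
  Rabs R1 <= (a*d)^3 + (a*e)^3 -> Rabs R2 <= 3*a*(d^2+e^2) ->
  (e - d) * (E1*(1+a*t1)+C) = - (E1*t1*((a*d)^2+(a*e)^2)/2 + E1*t1*R1 + E1*R2) ->
  Rabs (a*n^2*(d-e) - 1) <= K3 a C * y.
Proof.
  intros Ha HC Hn Hy Hny Ht1 Ht1b Ht1y HE1 Hf1 Hd He HD HD' HEe HEe' P1l P1b HR1 HR2 Id.
  set (P1 := E1*(1+a*t1)+C) in *. set (K := KP a C) in *.
  assert (HK : 0 <= K) by (unfold K, KP; nra).
  set (D := a*n*d) in *. set (Ee := a*n*e) in *. set (G := E1*t1).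
  set (W := a*n^2*(d-e) - 1).
  assert (HD0 : 0 < D) by (unfold D; apply Rmult_lt_0_compat; nra).
  assert (HEe0 : 0 < Ee) by (unfold Ee; apply Rmult_lt_0_compat; nra).
  set (T1 := a*(G-n)*((D^2+Ee^2)/2)).
  set (T2 := a*n*((D^2+Ee^2)/2 - 1)).
  set (T3 := a*n - P1).
  set (T4 := a*n^2*G*R1).
  set (T5 := a*n^2*E1*R2).
  assert (EQ : W*P1 = T1+T2+T3+T4+T5).
  { assert (W*P1 - (T1+T2+T3+T4+T5) = -(a*n^2) * ((e-d)*P1 + (E1*t1*((a*d)^2+(a*e)^2)/2 + E1*t1*R1 + E1*R2))).
    { unfold W, T1, T2, T3, T4, T5, G, D, Ee. unfold P1. field. }
    rewrite Id in H. lra. }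
  assert (HG : Rabs (G - n) <= (1+18*C)*n*y).
  { assert (G - n = 1 - C*t1) by (unfold G; lra).
    rewrite H. apply Rabs_le. assert (C*t1 <= C*(18*n*y)) by (apply Rmult_le_compat_l; lra).
    assert (0 <= C*t1) by (apply Rmult_le_pos; lra). split; nra. }
  assert (HS : 0 <= (D^2+Ee^2)/2 <= 2).
  { assert (D^2 <= 2) by (simpl; nra). assert (Ee^2 <= 2) by (simpl; nra).
    assert (0 <= D^2) by apply pow2_ge_0. assert (0 <= Ee^2) by apply pow2_ge_0. lra. }
  assert (B1 : Rabs T1 <= 2*a*(1+18*C)*n*y).
  { unfold T1. rewrite !Rabs_mult. rewrite (Rabs_right a) by lra.
    rewrite (Rabs_right ((D^2+Ee^2)/2)) by lra.
    assert (0 <= Rabs (G-n)) by apply Rabs_pos.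
    assert (Rabs (G-n) * ((D^2+Ee^2)/2) <= ((1+18*C)*n*y) * 2).
    { apply Rmult_le_compat; lra. }
    nra. }
  assert (B2 : Rabs T2 <= 6*a*(2*K)*n*y).
  { unfold T2. pose proof (sq_close D K y HD HD0 HD') as S1.
    pose proof (sq_close Ee K y HEe HEe0 HEe') as S2.
    replace ((D^2+Ee^2)/2 - 1) with ((D^2-1)/2 + (Ee^2-1)/2) by field.
    rewrite Rabs_mult. rewrite (Rabs_right (a*n)) by nra.
    assert (Rabs ((D^2-1)/2 + (Ee^2-1)/2) <= 3*(2*K*y)).
    { eapply Rle_trans. apply Rabs_triang. unfold Rdiv. rewrite !Rabs_mult.
      rewrite (Rabs_right (/2)) by lra. lra. }
    assert (0 <= a*n) by nra.
    assert (a*n*Rabs ((D^2-1)/2 + (Ee^2-1)/2) <= a*n*(3*(2*K*y))) by (apply Rmult_le_compat_l; lra).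
    assert (0 <= a*n*(K*y)) by (apply Rmult_le_pos; [|apply Rmult_le_pos]; lra). lra. }
  assert (B3 : Rabs T3 <= K*n*y).
  { unfold T3. rewrite Rabs_minus_sym. exact P1b. }
  assert (B4 : Rabs T4 <= 8*a*n*y).
  { assert (n^3*((a*d)^3 + (a*e)^3) = D^3 + Ee^3) by (unfold D, Ee; ring).
    assert (D^3 <= 64/27) by (simpl; nra). assert (Ee^3 <= 64/27) by (simpl; nra).
    assert (HG1 : 0 < G <= 3*n/2).
    { unfold G. split. apply Rmult_lt_0_compat; lra. assert (0 <= C*t1) by (apply Rmult_le_pos; lra). nra. }
    unfold T4. rewrite !Rabs_mult. rewrite (Rabs_right a) by lra.
    rewrite (Rabs_right (n^2)) by (apply Rle_ge; apply pow2_ge_0).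
    rewrite (Rabs_right G) by lra.
    assert (0 <= Rabs R1) by apply Rabs_pos.
    assert (n^3 * Rabs R1 <= 5).
    { assert (0 <= n^3) by (apply pow_le; lra).
      assert (n^3 * Rabs R1 <= n^3 * ((a*d)^3 + (a*e)^3)) by (apply Rmult_le_compat_l; lra). lra. }
    assert (a*n^2*G*Rabs R1 <= a*(3/2)*(n^3*Rabs R1)).
    { assert (0 <= a*n^2*Rabs R1) by (apply Rmult_le_pos; [apply Rmult_le_pos|]; try lra; apply pow2_ge_0).
      assert (a*n^2*Rabs R1*G <= a*n^2*Rabs R1*(3*n/2)) by (apply Rmult_le_compat_l; lra).
      replace (a*(3/2)*(n^3*Rabs R1)) with (a*n^2*Rabs R1*(3*n/2)) by field. lra. }
    assert (a*(3/2)*(n^3*Rabs R1) <= a*(3/2)*5) by (apply Rmult_le_compat_l; lra).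
    assert (8*a <= 8*a*(n*y)) by nra. lra. }
  assert (B5 : Rabs T5 <= 18*n*y).
  { assert (HE1y : E1 <= (n+1)*y).
    { assert (E1 = (E1*t1)*y - E1*(y*t1 - 1)) by ring.
      assert (0 <= E1*(y*t1-1)) by (apply Rmult_le_pos; nra).
      assert (0 <= C*t1*y) by (apply Rmult_le_pos; [apply Rmult_le_pos|]; lra).
      nra. }
    assert (a*n^2*(3*a*(d^2+e^2)) = 3*(D^2+Ee^2)) by (unfold D, Ee; ring).
    unfold T5. rewrite !Rabs_mult. rewrite (Rabs_right a) by lra.
    rewrite (Rabs_right (n^2)) by (apply Rle_ge; apply pow2_ge_0).
    rewrite (Rabs_right E1) by lra.
    assert (0 <= a*n^2) by (apply Rmult_le_pos; [lra|apply pow2_ge_0]).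
    assert (a*n^2*Rabs R2 <= a*n^2*(3*a*(d^2+e^2))) by (apply Rmult_le_compat_l; lra).
    assert (a*n^2*Rabs R2 <= 12) by lra.
    assert (a*n^2*Rabs R2 * E1 <= 12 * E1) by (apply Rmult_le_compat_r; lra).
    assert (12*E1 <= 18*n*y) by nra.
    replace (a*n^2*E1*Rabs R2) with (a*n^2*Rabs R2*E1) by ring. lra. }
  assert (HW : Rabs W * P1 <= (K3 a C / 2) * n * y).
  { rewrite <- (Rabs_right P1) by nra. rewrite <- Rabs_mult. rewrite EQ.
    eapply Rle_trans. apply Rabs_triang5.
    replace (K3 a C / 2 * n * y) with (2*a*(1+18*C)*n*y + 6*a*(2*K)*n*y + K*n*y + 8*a*n*y + 18*n*y) by (unfold K3; fold K; field).
    lra. }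
  assert (HW2 : Rabs W * (3*a*n/4) <= (K3 a C/2)*n*y).
  { assert (0 <= Rabs W) by apply Rabs_pos.
    assert (Rabs W * (3*a*n/4) <= Rabs W * P1) by (apply Rmult_le_compat_l; lra). lra. }
  assert (HW3 : Rabs W * (3*a/4) <= (K3 a C/2)*y) by (apply (Rmult_le_reg_l n); lra).
  assert (0 <= Rabs W) by apply Rabs_pos.
  assert (Rabs W * (3/4) <= Rabs W * (3*a/4)) by (apply Rmult_le_compat_l; lra).
  unfold W in *. assert (0 <= K3 a C * y) by (apply Rmult_le_pos; [unfold K3; fold K; nra|lra]).
  lra.
Qed.

Lemma div_le (X B m : R) : 0 < m -> Rabs X * m <= B -> Rabs X <= B / m.
Proof. intros Hm H. apply Rmult_le_reg_r with m; auto. unfold Rdiv. rewrite Rmult_assoc, Rinv_l by lra. lra. Qed.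

Lemma div_bound (X B a m : R) : Rabs X <= B -> 1 <= a -> 0 < m -> Rabs (X / (a*m)) <= B / m.
Proof.
  intros H Ha Hm. apply div_le; auto.
  unfold Rdiv. rewrite Rabs_mult, Rabs_Rinv by nra. rewrite (Rabs_right (a*m)) by nra.
  assert (0 <= Rabs X) by apply Rabs_pos.
  replace (Rabs X * / (a*m) * m) with (Rabs X / a) by (field; lra).
  unfold Rdiv. assert (/a <= 1) by (rewrite <- Rinv_1; apply Rinv_le_contravar; lra).
  assert (0 < /a) by (apply Rinv_0_lt_compat; lra). nra.
Qed.

Lemma per_n (a C n t0 t1 t2 : R) : 1 <= a -> 0 <= C -> 2 <= n ->
  0 < t0 -> 0 < t1 -> 0 < t2 ->
  t0 * (exp (a*t0) + C) = n -> t1 * (exp (a*t1) + C) = n + 1 -> t2 * (exp (a*t2) + C) = n + 2 ->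
  1 <= t0 -> C*t0 <= n/4 -> C*t1 <= n/4 -> C*t2 <= n/4 ->
  Rabs (t1 - t0 - (1/(a*n) - 1/(a^2*n*t0))) <= K1 a C * (/t0)^2 / n /\
  Rabs (t2 - t1 - (1/(a*n) - 1/(a^2*n*t0))) <= (K1 a C + 18 + K3 a C) * (/t0)^2 / n /\
  Rabs (2*t1 - t0 - t2 - 1/(a*n^2)) <= K3 a C * (/t0) / n^2 /\
  Rabs (1/t0 + 1/t2 - 2/t1) <= (5 + K3 a C) * (/t0)^2 / n^2.
Proof.
  intros Ha HC Hn H0 H1 H2 F0 F1 F2 Ht0 Hc0 Hc1 Hc2.
  assert (H01 : t0 < t1) by (apply (f_mono a C); try lra).
  assert (H12 : t1 < t2) by (apply (f_mono a C); try lra).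
  destruct (size_bounds a C t0 n Ha HC H0 F0) as [Q0 [_ N0]].
  destruct (size_bounds a C t1 (n+1) Ha HC H1 F1) as [Q1 _].
  destruct (size_bounds a C t2 (n+2) Ha HC H2 F2) as [Q2 _].
  set (y := /t0).
  assert (Hyt : y * t0 = 1) by (unfold y; field; lra).
  assert (Hy : 0 < y) by (unfold y; apply Rinv_0_lt_compat; lra).
  assert (Hy1 : y <= 1) by nra.
  assert (Hny : 1 <= n*y) by nra.
  assert (q0 : t0^4 <= 18*n) by lra.
  assert (q1 : t1^4 <= 18*n) by lra.
  assert (q2 : t2^4 <= 18*n) by lra.
  assert (tb : forall t, t0 <= t -> t^4 <= 18*n -> t <= 18*n*y /\ 1 <= t*y).
  { intros t Ht Hq. assert (1 <= t) by lra.
    assert (t^2 <= t^4) by (apply Rle_pow; lia || lra).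
    assert (t*t0 <= t^2) by (simpl; nra).
    split. assert (t = t*t0*y) by (rewrite Rmult_assoc, (Rmult_comm t0), Hyt; ring).
    assert (t*t0*y <= 18*n*y) by (apply Rmult_le_compat_r; lra). lra.
    assert (t0*y <= t*y) by (apply Rmult_le_compat_r; lra). lra. }
  destruct (tb t0 ltac:(lra) q0) as [b0 c0].
  destruct (tb t1 ltac:(lra) q1) as [b1 c1].
  destruct (tb t2 ltac:(lra) q2) as [b2 c2].
  pose proof (exp_pos (a*t0)). pose proof (exp_pos (a*t1)). pose proof (exp_pos (a*t2)).
  destruct (P_bounds a C n t0 y (exp (a*t0)) 0 Ha HC Hn ltac:(lra) Hy c0 H0 H ltac:(lra) Hc0 b0 Hny) as [P0l P0b].
  destruct (P_bounds a C n t1 y (exp (a*t1)) 1 Ha HC Hn ltac:(lra) Hy c1 H1 H3 ltac:(lra) Hc1 b1 Hny) as [P1l P1b].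
  destruct (P_bounds a C n t2 y (exp (a*t2)) 2 Ha HC Hn ltac:(lra) Hy c2 H2 H4 ltac:(lra) Hc2 b2 Hny) as [P2l P2b].
  destruct (step_bounds a C t0 t1 Ha HC H0 H01 ltac:(lra)) as [S0 S1].
  destruct (step_bounds a C t1 t2 Ha HC H1 H12 ltac:(lra)) as [S1' S2].
  destruct (D_bounds a n y (KP a C) (t1-t0) _ _ Ha Hn ltac:(lra) S0 S1 P0l P1l P0b P1b) as [Dd Dd'].
  destruct (D_bounds a n y (KP a C) (t2-t1) _ _ Ha Hn ltac:(lra) S1' S2 P1l P2l P1b P2b) as [De De'].
  assert (u1 : a*(t1-t0) <= 1).
  { assert (a*(t1-t0)*n <= 4/3) by lra. nra. }
  assert (v1 : a*(t2-t1) <= 1).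
  { assert (a*(t2-t1)*n <= 4/3) by lra. nra. }
  destruct (ident a C t0 t1 t2 Ha HC H0 H01 H12 ltac:(lra) ltac:(lra) u1 v1) as [R1 [R2 [HR1 [HR2 Id]]]].
  pose proof (C1_bound a C n t0 t1 y (exp (a*t0)) (exp (a*t1)) (t1-t0) Ha HC Hn Hyt Ht0 ltac:(lra) H H3 ltac:(lra) F0 F1 S0 S1 P0l P1l P1b q0) as Z1.
  pose proof (C3_bound a C n t1 y (exp (a*t1)) (t1-t0) (t2-t1) R1 R2 Ha HC Hn Hy Hny H1 b1 c1 H3 F1 ltac:(lra) ltac:(lra) Dd Dd' De De' P1l P1b HR1 HR2 Id) as Z3.
  fold y. set (d := t1 - t0) in *. set (e := t2 - t1) in *.
  assert (hd0 : 0 < d) by (unfold d; lra). assert (he0 : 0 < e) by (unfold e; lra).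
  assert (Hn0 : 0 < n) by lra.
  assert (Hny2 : 1 <= 18*n*y^2).
  { assert (t0^2 <= t0^4) by (apply Rle_pow; lia || lra).
    assert (t0^2*y^2 = 1) by (replace (t0^2*y^2) with ((y*t0)^2) by ring; rewrite Hyt; ring). nra. }
  assert (G1 : t1 - t0 - (1/(a*n) - 1/(a^2*n*t0)) = (a*n*d - 1 + y/a) / (a*n)).
  { unfold d, y. field. lra. }
  assert (A1 : Rabs (t1 - t0 - (1/(a*n) - 1/(a^2*n*t0))) <= K1 a C * y^2 / n).
  { rewrite G1. apply div_bound; auto. }
  assert (G3 : 2*t1 - t0 - t2 - 1/(a*n^2) = (a*n^2*(d-e) - 1)/(a*n^2)).
  { unfold d, e. field. lra. }
  assert (A3 : Rabs (2*t1 - t0 - t2 - 1/(a*n^2)) <= K3 a C * y / n^2).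
  { rewrite G3. apply div_bound; auto. apply pow_lt; lra. }
  assert (HK3 : 0 <= K3 a C) by (unfold K3, KP; nra).
  assert (HK1 : 0 <= K1 a C) by (unfold K1, KP; nra).
  assert (W1 : Rabs (1 + (a*n^2*(d-e) - 1)) <= 1 + K3 a C * y).
  { eapply Rle_trans. apply Rabs_triang. rewrite Rabs_R1. lra. }
  assert (G2 : t2 - t1 - (1/(a*n) - 1/(a^2*n*t0)) = (a*n*d - 1 + y/a) / (a*n) - (1 + (a*n^2*(d-e) - 1))/(a*n^2)).
  { unfold d, e, y. field. lra. }
  assert (A2 : Rabs (t2 - t1 - (1/(a*n) - 1/(a^2*n*t0))) <= (K1 a C + 18 + K3 a C) * y^2 / n).
  { rewrite G2. unfold Rminus at 1. eapply Rle_trans. apply Rabs_triang. rewrite Rabs_Ropp.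
    pose proof (div_bound _ _ a n Z1 Ha Hn0) as X1.
    pose proof (div_bound _ _ a (n^2) W1 Ha ltac:(apply pow_lt; lra)) as X2.
    assert ((1 + K3 a C * y) / n^2 <= (18 + K3 a C) * y^2 / n).
    { assert (K3 a C * y <= K3 a C * y^2 * n) by (replace (K3 a C * y^2 * n) with (K3 a C * y * (n*y)) by ring; rewrite <- (Rmult_1_r (K3 a C * y)) at 1; apply Rmult_le_compat_l; [apply Rmult_le_pos|]; lra).
      assert (Hle : 1 + K3 a C * y <= (18 + K3 a C) * y^2 * n) by nra.
      replace ((18 + K3 a C) * y^2 / n) with (((18 + K3 a C) * y^2 * n) / n^2) by (field; lra).
      unfold Rdiv. apply Rmult_le_compat_r; auto. left; apply Rinv_0_lt_compat, pow_lt; lra. }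
    replace ((K1 a C + 18 + K3 a C) * y^2 / n) with (K1 a C * y^2 / n + (18 + K3 a C) * y^2 / n) by (field; lra).
    lra. }
  assert (G4 : 1/t0 + 1/t2 - 2/t1 = ((d - e) + 2*d*e*/t1) * y * /t2).
  { unfold d, e, y. field. repeat split; lra. }
  assert (Hy1' : 0 < /t1 <= 1).
  { split. apply Rinv_0_lt_compat; lra. rewrite <- Rinv_1. apply Rinv_le_contravar; lra. }
  assert (Hy2' : 0 < /t2 <= y).
  { split. apply Rinv_0_lt_compat; lra. unfold y. apply Rinv_le_contravar; lra. }
  assert (M1 : Rabs (n^2*(d-e)) <= 1 + K3 a C).
  { assert (n^2*(d-e) = (1 + (a*n^2*(d-e) - 1)) / a) by (field; lra).
    rewrite H5. unfold Rdiv. rewrite Rabs_mult, (Rabs_right (/a)) by (apply Rle_ge; left; apply Rinv_0_lt_compat; lra).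
    assert (/a <= 1) by (rewrite <- Rinv_1; apply Rinv_le_contravar; lra).
    assert (0 < /a) by (apply Rinv_0_lt_compat; lra).
    assert (0 <= Rabs (1 + (a * n ^ 2 * (d - e) - 1))) by apply Rabs_pos.
    assert (K3 a C * y <= K3 a C) by nra. nra. }
  assert (M2 : 0 <= n^2*(d*e*/t1) <= 2).
  { assert (n^2*(d*e) = (a*n*d)*(a*n*e)/(a*a)) by (field; lra).
    assert (0 < a*n*d) by (apply Rmult_lt_0_compat; [apply Rmult_lt_0_compat|]; lra).
    assert (0 < a*n*e) by (apply Rmult_lt_0_compat; [apply Rmult_lt_0_compat|]; lra).
    assert (a*n*d*(a*n*e) <= 16/9) by nra.
    assert (n^2*(d*e) <= 2).
    { rewrite H5. unfold Rdiv. assert (0 < /(a*a) <= 1).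
      { split. apply Rinv_0_lt_compat; nra. rewrite <- Rinv_1. apply Rinv_le_contravar; nra. }
      nra. }
    assert (0 <= n^2*(d*e)) by (apply Rmult_le_pos; [apply pow2_ge_0|nra]).
    replace (n^2*(d*e*/t1)) with (n^2*(d*e)*/t1) by ring. split; nra. }
  assert (A4 : Rabs (1/t0 + 1/t2 - 2/t1) <= (5 + K3 a C) * y^2 / n^2).
  { rewrite G4. apply div_le. apply pow_lt; lra.
    assert (E4 : ((d - e) + 2*d*e*/t1) * y * /t2 * n^2 = (n^2*(d-e) + 2*(n^2*(d*e*/t1))) * (y * /t2)) by ring.
    rewrite <- (Rabs_right (n^2)) by (apply Rle_ge, pow2_ge_0).
    rewrite <- Rabs_mult, E4, Rabs_mult.
    rewrite (Rabs_right (y * /t2)) by (apply Rle_ge; apply Rmult_le_pos; lra).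
    assert (Rabs (n^2*(d-e) + 2*(n^2*(d*e*/t1))) <= 5 + K3 a C).
    { eapply Rle_trans. apply Rabs_triang. rewrite (Rabs_right (2*(n^2*(d*e*/t1)))) by lra. lra. }
    assert (y * /t2 <= y^2) by (simpl; rewrite Rmult_1_r; apply Rmult_le_compat_l; lra).
    assert (0 <= y * /t2) by (apply Rmult_le_pos; lra).
    assert (0 <= Rabs (n^2*(d-e) + 2*(n^2*(d*e*/t1)))) by apply Rabs_pos.
    apply Rle_trans with ((5 + K3 a C) * (y * /t2)).
    apply Rmult_le_compat_r; lra.
    apply Rmult_le_compat_l; lra. }
  auto.
Qed.


From Stdlib Require Import ZArith.
Open Scope R_scope.

Lemma pow4_lt (x y : R) : 0 <= x -> x < y -> x^4 < y^4.
Proof. intros. assert (x^2 < y^2) by (simpl; nra). assert (0 <= x^2) by (apply pow2_ge_0).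
  replace (x^4) with ((x^2)^2) by ring. replace (y^4) with ((y^2)^2) by ring. simpl; nra. Qed.

Lemma Ct_small (C t n : R) : 0 <= C -> 0 < t -> 1 <= n -> 4608*C^4 < n -> t^4 <= 18*n -> C*t <= n/4.
Proof.
  intros HC Ht Hn Hb Hq. destruct (Rle_or_lt (C*t) (n/4)) as [h|h]; auto. exfalso.
  assert ((n/4)^4 < (C*t)^4) by (apply pow4_lt; lra).
  assert ((C*t)^4 = C^4 * t^4) by ring.
  assert (0 <= C^4) by (apply pow_le; lra).
  assert (C^4*t^4 <= C^4*(18*n)) by (apply Rmult_le_compat_l; lra).
  assert (n <= n^3) by (replace n with (n^1) at 1 by ring; apply Rle_pow; lia || lra).
  assert ((n/4)^4 = n*n^3/256) by (field).
  assert (n*n^3 >= n*n) by nra.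
  nra.
Qed.

Lemma all_bounds (m c : nat) (t : nat -> nat -> R) :
  (0 < m)%nat ->
  (forall n i : nat, (1 <= n)%nat -> (i <= 2)%nat ->
     0 < t n i /\ fmc m c (t n i) = INR (n + i)) ->
  exists N0 : nat, forall n : nat, (N0 <= n)%nat ->
   let a := INR m in let C := INR c in let L := ln (INR n) in
   Rabs (t n 1%nat - t n 0%nat - (1 / (INR m * INR n) - 1 / (INR m ^ 2 * INR n * t n 0%nat)))
     <= (16*a^2*K1 a C) * Rabs (1 / (INR n * L ^ 2)) /\
   Rabs (t n 2%nat - t n 1%nat - (1 / (INR m * INR n) - 1 / (INR m ^ 2 * INR n * t n 0%nat)))
     <= (16*a^2*(K1 a C + 18 + K3 a C)) * Rabs (1 / (INR n * L ^ 2)) /\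
   Rabs (2 * t n 1%nat - t n 0%nat - t n 2%nat - 1 / (INR m * INR n ^ 2))
     <= (4*a*K3 a C) * Rabs (1 / (INR n ^ 2 * L)) /\
   Rabs (1 / t n 0%nat + 1 / t n 2%nat - 2 / t n 1%nat)
     <= (16*a^2*(5 + K3 a C)) * Rabs (1 / (INR n ^ 2 * L ^ 2)).
Proof.
  intros Hm Ht.
  set (a := INR m). set (C := INR c).
  assert (Ha : 1 <= a) by (unfold a; apply (le_INR 1); lia).
  assert (HC : 0 <= C) by apply pos_INR.
  set (X := 2 + exp (4*a + 2*ln (1+C)) + 4608*C^4).
  assert (HX : 2 < X) by (unfold X; pose proof (exp_pos (4*a + 2*ln (1+C))); assert (0 <= C^4) by (apply pow_le; lra); lra).
  destruct (archimed X) as [Hup _].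
  assert (Hz : (0 <= up X)%Z) by (apply le_IZR; lra).
  exists (Z.to_nat (up X)). intros n Hn. cbv zeta.
  assert (HnX : X < INR n).
  { apply le_INR in Hn. rewrite INR_IZR_INZ, Z2Nat.id in Hn by exact Hz. lra. }
  fold a C.
  set (L := ln (INR n)). set (nr := INR n) in *.
  assert (Hn2 : 2 <= nr) by lra.
  assert (Hn1 : (1 <= n)%nat) by (apply INR_le; simpl; fold nr; lra).
  destruct (Ht n 0%nat Hn1 ltac:(lia)) as [T0 F0].
  destruct (Ht n 1%nat Hn1 ltac:(lia)) as [T1 F1].
  destruct (Ht n 2%nat Hn1 ltac:(lia)) as [T2 F2].
  unfold fmc in F0, F1, F2. fold a C in F0, F1, F2.
  rewrite plus_INR in F0, F1, F2. simpl INR in F0, F1, F2. fold nr in F0, F1, F2.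
  replace (nr + 0) with nr in F0 by ring.
  set (t0 := t n 0%nat) in *. set (t1 := t n 1%nat) in *. set (t2 := t n 2%nat) in *.
  destruct (size_bounds a C t0 nr Ha HC T0 F0) as [Q0 [Ln0 _]].
  destruct (size_bounds a C t1 (nr+1) Ha HC T1 F1) as [Q1 _].
  destruct (size_bounds a C t2 (nr+2) Ha HC T2 F2) as [Q2 _].
  assert (HL : 4*a + 2*ln (1+C) <= L).
  { unfold L. rewrite <- (ln_exp (4*a + 2*ln (1+C))). apply ln_le'. apply exp_pos.
    unfold X in HnX. assert (0 <= C^4) by (apply pow_le; lra). lra. }
  assert (Hl1 : 0 <= ln (1+C)).
  { rewrite <- ln_1. apply ln_le'; lra. }
  assert (Ln0p : L <= 2*a*t0 + ln (1+C)) by exact Ln0. assert (Ht0L : L/2 + 2*a <= 2*a*t0) by lra.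
  assert (Ht0 : 1 <= t0) by nra.
  assert (HL0 : 0 < L) by lra.
  assert (Hb4 : 4608*C^4 < nr) by (unfold X in HnX; pose proof (exp_pos (4*a + 2*ln (1+C))); lra).
  assert (c0 : C*t0 <= nr/4) by (apply Ct_small; lra).
  assert (c1 : C*t1 <= nr/4) by (apply Ct_small; lra).
  assert (c2 : C*t2 <= nr/4) by (apply Ct_small; lra).
  destruct (per_n a C nr t0 t1 t2 Ha HC Hn2 T0 T1 T2 F0 F1 F2 Ht0 c0 c1 c2) as [B1 [B2 [B3 B4]]].
  assert (Hy : 0 < /t0 <= 4*a/L).
  { split. apply Rinv_0_lt_compat; lra.
    assert (L <= 4*a*t0) by lra.
    apply (Rmult_le_reg_r (t0*L)). nra.
    replace (/t0 * (t0*L)) with L by (field; lra).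
    replace (4*a/L*(t0*L)) with (4*a*t0) by (field; lra). lra. }
  assert (Hy2 : (/t0)^2 <= 16*a^2/L^2).
  { replace (16*a^2/L^2) with ((4*a/L)^2) by (field; lra). apply pow_incr; lra. }
  assert (HK1 : 0 <= K1 a C) by (unfold K1, KP; nra).
  assert (HK3 : 0 <= K3 a C) by (unfold K3, KP; nra).
  assert (Hn0 : 0 < nr) by lra.
  assert (HL2 : 0 < L^2) by (apply pow_lt; lra).
  assert (Hnn : 0 < nr^2) by (apply pow_lt; lra).
  assert (pos : forall z, 0 < z -> Rabs (1/z) = 1/z).
  { intros z hz. apply Rabs_right. apply Rle_ge. unfold Rdiv. rewrite Rmult_1_l. left; apply Rinv_0_lt_compat; auto. }
  rewrite (pos (nr*L^2)) by nra. rewrite (pos (nr^2*L)) by nra. rewrite (pos (nr^2*L^2)) by nra.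
  repeat split.
  - eapply Rle_trans. apply B1. replace (16 * a ^ 2 * K1 a C * (1 / (nr * L ^ 2))) with (K1 a C * (16*a^2/L^2) / nr) by (field; lra).
    unfold Rdiv. apply Rmult_le_compat_r. left; apply Rinv_0_lt_compat; lra. apply Rmult_le_compat_l; lra.
  - eapply Rle_trans. apply B2. replace (16 * a ^ 2 * (K1 a C + 18 + K3 a C) * (1 / (nr * L ^ 2))) with ((K1 a C + 18 + K3 a C) * (16*a^2/L^2) / nr) by (field; lra).
    unfold Rdiv. apply Rmult_le_compat_r. left; apply Rinv_0_lt_compat; lra. apply Rmult_le_compat_l; lra.
  - eapply Rle_trans. apply B3. replace (4 * a * K3 a C * (1 / (nr^2 * L))) with (K3 a C * (4*a/L) / nr^2) by (field; lra).
    unfold Rdiv. apply Rmult_le_compat_r. left; apply Rinv_0_lt_compat; lra. apply Rmult_le_compat_l; lra.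
  - eapply Rle_trans. apply B4. replace (16 * a ^ 2 * (5 + K3 a C) * (1 / (nr^2 * L ^ 2))) with ((5 + K3 a C) * (16*a^2/L^2) / nr^2) by (field; lra).
    unfold Rdiv. apply Rmult_le_compat_r. left; apply Rinv_0_lt_compat; lra. apply Rmult_le_compat_l; lra.
Qed.


Theorem lemma5 (m c : nat) (t : nat -> nat -> R) :
  (0 < m)%nat ->
  (forall n i : nat, (1 <= n)%nat -> (i <= 2)%nat ->
     0 < t n i /\ fmc m c (t n i) = INR (n + i)) ->
  bigO (fun n => t n 1%nat - t n 0%nat
                 - (1 / (INR m * INR n) - 1 / (INR m ^ 2 * INR n * t n 0%nat)))
       (fun n => 1 / (INR n * (ln (INR n)) ^ 2)) /\
  bigO (fun n => t n 2%nat - t n 1%nat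
                 - (1 / (INR m * INR n) - 1 / (INR m ^ 2 * INR n * t n 0%nat)))
       (fun n => 1 / (INR n * (ln (INR n)) ^ 2)) /\
  bigO (fun n => 2 * t n 1%nat - t n 0%nat - t n 2%nat - 1 / (INR m * INR n ^ 2))
       (fun n => 1 / (INR n ^ 2 * ln (INR n))) /\
  bigO (fun n => 1 / t n 0%nat + 1 / t n 2%nat - 2 / t n 1%nat)
       (fun n => 1 / (INR n ^ 2 * (ln (INR n)) ^ 2)).
Proof.
  intros Hm Ht. destruct (all_bounds m c t Hm Ht) as [N0 HN].
  split; [|split; [|split]].
  - exists (16*INR m^2*K1 (INR m) (INR c)), N0. intros n Hn. apply (HN n Hn).
  - exists (16*INR m^2*(K1 (INR m) (INR c) + 18 + K3 (INR m) (INR c))), N0. intros n Hn. apply (HN n Hn).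
  - exists (4*INR m*K3 (INR m) (INR c)), N0. intros n Hn. apply (HN n Hn).
  - exists (16*INR m^2*(5 + K3 (INR m) (INR c))), N0. intros n Hn. apply (HN n Hn).
Qed.
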